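(* Let $n\in\mathbb{N}$ with $n\ge2$ and $S:=\{0,\dots,n-1\}$. If $C\subseteq\operatorname{codes}(S)$ is $n$-essential, then for every $m\in\{2,\dots,n-1\}$, with $S_m:=\{0,\dots,m-1\}$, the set \[ C':=\{x{\downarrow_{m-1}} : x\in C,\ \operatorname{center}(x)\le m-2\}\subseteq\operatorname{codes}(S_m) \] is $m$-essential.
   Context: A coronal code over $S$ of length $m$ is a formal string $x=c:p_0p_1\dots p_{m-1}$ with $c,p_i\in S$; $\operatorname{center}(x)=c$, $\operatorname{petals}(x)=\{p_0,\dots,p_{m-1}\}$; codes are identified up to rotation/reversal of the petal string, giving $\operatorname{codes}(S)$. For $a,b,c\in S$ (indeterminates), $c^a_b:=\arccos\!\Big(\frac{(c+a)^2+(c+b)^2-(a+b)^2}{2(c+a)(c+b)}\Big)$, and $\alpha(x):=\sum_{i=0}^{m-1} c^{p_i}_{p_{i+1\bmod m}}$. For $\rho\in(0,\infty)^S$, $\alpha(x)|_\rho$ is the value obtained by substituting $\rho(s)$ for each symbol $s$. For $S=\{0,\dots,n-1\}$, a nonempty $C\subseteq\operatorname{codes}(S)$ is fundamental if $\{\operatorname{center}(x):x\in C\}=\{0,\dots,n-2\}$ and for every nonempty $K\subseteq\{0,\dots,n-2\}$ there is $D\subseteq C$ with $\{\operatorname{center}(x):x\in D\}=K$ and $\big(\bigcup_{x\in D}\operatorname{petals}(x)\big)\setminus K\ne\emptyset$. $C$ is $n$-essential if it is fundamental and there exist nondecreasing maps $\rho,\sigma:S\to(0,\infty)$ with $\alpha(x)|_\rho\le2\pi\le\alpha(x)|_\sigma$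 for all $x\in C$. For a code $x$ over $\{0,\dots,n-1\}$ and $k$, $x{\downarrow_k}$ denotes the code obtained by replacing every symbol of $x$ strictly larger than $k$ by $k$. *)

(* Defs.v *)
From Stdlib Require Import Reals List Arith Lia.
Open Scope R_scope.

(* A coronal code c:p_0...p_{m-1}, represented by a center and its petal
   string.  All notions below are invariant under rotation/reversal of the
   petal string, so sets of codes are represented as sets of such
   representatives. *)
Record code := mkCode { center : nat; petal_str : list nat }.

Definition is_petal (x : code) (p : nat) : Prop := In p (petal_str x).

Definition in_codes (n : nat) (x : code) : Prop :=
  (center x < n)%nat /\ Forall (fun p => (p < n)%nat) (petal_str x).

Definition angle (c a b : R) : R :=
  acos (((c + a) ^ 2 + (c + b) ^ 2 - (a + b) ^ 2) / (2 * (c + a) * (c + b))).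

Definition alpha (x : code) (rho : nat -> R) : R :=
  let p := petal_str x in
  let m := length p in
  fold_right Rplus 0
    (map (fun i => angle (rho (center x)) (rho (nth i p 0%nat))
                         (rho (nth ((i + 1) mod m) p 0%nat)))
         (seq 0 m)).

Definition fundamental (n : nat) (C : code -> Prop) : Prop :=
  (exists x, C x) /\
  (forall c, (exists x, C x /\ center x = c) <-> (c < n - 1)%nat) /\
  (forall K : nat -> Prop,
     (exists k, K k) -> (forall k, K k -> (k < n - 1)%nat) ->
     exists D : code -> Prop,
       (forall x, D x -> C x) /\
       (forall c, (exists x, D x /\ center x = c) <-> K c) /\
       (exists p, (exists x, D x /\ is_petal x p) /\ ~ K p)).

Definition pos_nondecr (n : nat) (rho : nat -> R) : Prop :=
  (forall i, (i < n)%nat -> 0 < rho i) /\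
  (forall i j, (i <= j)%nat -> (j < n)%nat -> rho i <= rho j).

Definition essential (n : nat) (C : code -> Prop) : Prop :=
  fundamental n C /\
  exists rho sigma : nat -> R,
    pos_nondecr n rho /\ pos_nondecr n sigma /\
    (forall x, C x -> alpha x rho <= 2 * PI <= alpha x sigma).

Definition down (k : nat) (x : code) : code :=
  mkCode (Nat.min (center x) k) (map (fun s => Nat.min s k) (petal_str x)).

Definition restrict_codes (m : nat) (C : code -> Prop) : code -> Prop :=
  fun y => exists x, C x /\ (center x <= m - 2)%nat /\ y = down (m - 1) x.

(* Main.v *)
Require Import Defs.
From Stdlib Require Import Reals List Arith Lia Lra.
Open Scope R_scope.

Lemma acos_le x y : -1 <= x -> x <= y -> y <= 1 -> acos y <= acos x.
Proof.
  intros h1 h2 h3.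
  destruct (Rle_dec (acos y) (acos x)) as [h|h]; auto.
  exfalso. apply Rnot_le_lt in h.
  pose proof (acos_bound x); pose proof (acos_bound y).
  pose proof (cos_decreasing_1 (acos x) (acos y) ltac:(lra) ltac:(lra) ltac:(lra) ltac:(lra) h).
  rewrite !cos_acos in H1; lra.
Qed.

Lemma frac_mono c a a' : 0 < c -> 0 < a -> a <= a' -> a / (c + a) <= a' / (c + a').
Proof.
  intros hc ha haa.
  assert (E : a' / (c + a') - a / (c + a) = c * (a' - a) / ((c + a) * (c + a'))) by (field; lra).
  assert (0 <= c * (a' - a) / ((c + a) * (c + a'))).
  { unfold Rdiv. apply Rmult_le_pos. apply Rmult_le_pos; lra.
    left; apply Rinv_0_lt_compat; nra. }
  lra.
Qed.

Lemma frac_bnd c a : 0 < c -> 0 < a -> 0 <= a / (c + a) <= 1.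
Proof.
  intros hc ha. split. unfold Rdiv; apply Rmult_le_pos; [lra| left; apply Rinv_0_lt_compat; lra].
  apply Rmult_le_reg_r with (c + a); [lra|]. unfold Rdiv. rewrite Rmult_assoc, Rinv_l; lra.
Qed.

Lemma angle_eq c a b : 0 < c -> 0 < a -> 0 < b ->
  angle c a b = acos (1 - 2 * ((a / (c + a)) * (b / (c + b)))).
Proof.
  intros; unfold angle; f_equal; field; lra.
Qed.

Lemma angle_mono c a b a' b' : 0 < c -> 0 < a -> 0 < b -> a <= a' -> b <= b' ->
  angle c a b <= angle c a' b'.
Proof.
  intros hc ha hb h1 h2.
  rewrite !angle_eq by lra.
  pose proof (frac_mono c a a' hc ha h1). pose proof (frac_mono c b b' hc hb h2).
  pose proof (frac_bnd c a hc ha). pose proof (frac_bnd c b hc hb).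
  pose proof (frac_bnd c a' hc ltac:(lra)). pose proof (frac_bnd c b' hc ltac:(lra)).
  apply acos_le; nra.
Qed.

Lemma sum_le (l : list nat) (f g : nat -> R) : (forall i, f i <= g i) ->
  fold_right Rplus 0 (map f l) <= fold_right Rplus 0 (map g l).
Proof. intros H; induction l; simpl; [lra| pose proof (H a); lra]. Qed.

Lemma nth_map_min k p i : nth i (map (fun s => Nat.min s k) p) 0%nat = Nat.min (nth i p 0%nat) k.
Proof. revert i; induction p; intros [|i]; simpl; auto. Qed.

Lemma alpha_down k x r : alpha (down k x) r =
  fold_right Rplus 0 (map (fun i => angle (r (Nat.min (center x) k))
     (r (Nat.min (nth i (petal_str x) 0%nat) k))
     (r (Nat.min (nth ((i + 1) mod length (petal_str x)) (petal_str x) 0%nat) k)))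
   (seq 0 (length (petal_str x)))).
Proof.
  unfold alpha, down; simpl. rewrite length_map. f_equal. apply map_ext; intros.
  rewrite !nth_map_min; reflexivity.
Qed.

Lemma nth_lt n p i : (0 < n)%nat -> Forall (fun q => (q < n)%nat) p -> (nth i p 0 < n)%nat.
Proof.
  intros h H. revert i; induction H; intros [|i]; simpl; auto.
Qed.

Theorem lemma6p3 (n : nat) (C : code -> Prop) :
  (2 <= n)%nat ->
  (forall x, C x -> in_codes n x) ->
  essential n C ->
  forall m : nat, (2 <= m)%nat -> (m <= n - 1)%nat ->
    (forall y, restrict_codes m C y -> in_codes m y) /\
    essential m (restrict_codes m C).
Proof.
  intros hn Hin [[Hne [Hcent HK]] [rho [sigma [Hr [Hs Ha]]]]] m hm hmn.
  split.
  { intros y [x [Cx [hc ->]]]. split; simpl; [lia|].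
    apply Forall_map, Forall_forall; intros; lia. }
  split; [split; [|split]|].
  - destruct (proj2 (Hcent 0%nat) ltac:(lia)) as [x [Cx hx]].
    exists (down (m-1) x), x; repeat split; auto; lia.
  - intros c; split.
    + intros [y [[x [Cx [hc ->]]] <-]]; simpl; lia.
    + intros hc. destruct (proj2 (Hcent c) ltac:(lia)) as [x [Cx hx]].
      exists (down (m-1) x); split; [exists x; repeat split; auto; lia| simpl; lia].
  - intros K hK hKb.
    destruct (HK K hK ltac:(intros k hk; specialize (hKb k hk); lia)) as
      [D [HDC [HDc [p [[x [Dx hp]] hnp]]]]].
    exists (fun y => exists x, D x /\ y = down (m-1) x).
    split; [|split].
    + intros y [x' [Dx' ->]]. exists x'; repeat split; auto.
      assert (K (center x')) by (apply HDc; eauto). specialize (hKb _ H); lia.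
    + intros c; split.
      * intros [y [[x' [Dx' ->]] <-]]. simpl.
        assert (K (center x')) by (apply HDc; eauto). specialize (hKb _ H).
        rewrite Nat.min_l by lia; auto.
      * intros hc. destruct (proj2 (HDc c) hc) as [x' [Dx' hx']].
        exists (down (m-1) x'); split; [eauto| simpl].
        specialize (hKb _ hc). lia.
    + exists (Nat.min p (m-1)); split.
      * exists (down (m-1) x); split; [eauto|]. unfold is_petal; simpl.
        apply in_map_iff; eauto.
      * intros hk. specialize (hKb _ hk).
        destruct (Nat.lt_ge_cases p (m-1)).
        -- rewrite Nat.min_l in hk by lia; auto.
        -- rewrite Nat.min_r in hKb by lia; lia.
  - destruct Hr as [Hr1 Hr2]; destruct Hs as [Hs1 Hs2].
    exists rho, (fun i => if Nat.ltb i (m-1) then sigma i else sigma (n-1)%nat).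
    split; [|split].
    + split; intros; [apply Hr1; lia| apply Hr2; lia].
    + split.
      * intros i hi; destruct (Nat.ltb_spec i (m-1)); apply Hs1; lia.
      * intros i j hij hj; destruct (Nat.ltb_spec i (m-1)); destruct (Nat.ltb_spec j (m-1));
          try (apply Hs2; lia); try lra; lia.
    + intros y [x [Cx [hc ->]]].
      destruct (Ha x Cx) as [A1 A2]. destruct (Hin x Cx) as [hcn hpn].
      assert (NL : forall i, (nth i (petal_str x) 0 < n)%nat) by (intros; apply nth_lt; auto; lia).
      rewrite !alpha_down. split.
      * eapply Rle_trans; [|exact A1]. unfold alpha. apply sum_le; intros i.
        rewrite Nat.min_l by lia.
        pose proof (NL i); pose proof (NL ((i + 1) mod length (petal_str x))).
        apply angle_mono; try (apply Hr1; lia); apply Hr2; lia.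
      * eapply Rle_trans; [exact A2|]. unfold alpha. apply sum_le; intros i.
        rewrite Nat.min_l by lia.
        destruct (Nat.ltb_spec (center x) (m-1)); [|lia].
        pose proof (NL i); pose proof (NL ((i + 1) mod length (petal_str x))).
        apply angle_mono; try (apply Hs1; lia).
        -- destruct (Nat.ltb_spec (Nat.min (nth i (petal_str x) 0%nat) (m - 1)) (m-1)).
           ++ rewrite Nat.min_l by lia; lra.
           ++ apply Hs2; lia.
        -- destruct (Nat.ltb_spec (Nat.min (nth ((i + 1) mod length (petal_str x)) (petal_str x) 0%nat) (m - 1)) (m-1)).
           ++ rewrite Nat.min_l by lia; lra.
           ++ apply Hs2; lia.
Qed.
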